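(* If $\mathbf A$ is a complete perfect DqRA, then $\mathbf A\cong(\mathbf A_+)^+$ as DqRAs, via the map $\psi(a)=\{j\in J^\infty(\mathbf A)\mid j\leqslant a\}$.
   Context: A DqRA is a structure $(A,\wedge,\vee,\cdot,1,\sim,-,\neg)$ with $(A,\wedge,\vee)$ a distributive lattice, $(A,\cdot,1)$ a monoid, $a\cdot b\leqslant c\iff a\leqslant -(b\cdot{\sim}c)\iff b\leqslant{\sim}(-c\cdot a)$, $\neg\neg a=a$, $\neg(a\wedge b)=\neg a\vee\neg b$, and $\neg(a\cdot b)=\neg a+\neg b$ where $a+b=-({\sim}b\cdot{\sim}a)$. Complete perfect: complete, every element the join of completely join-irreducibles ($J^\infty(\mathbf A)$) below it and meet of completely meet-irreducibles above it. $\kappa(j)=\bigvee\{a\mid j\not\leqslant a\}$. $\mathbf A_+=(J^\infty(\mathbf A),I_1,\preccurlyeq,\circ,{}^\sim,{}^-,{}^\neg)$ with $I_1=\{i\in J^\infty(\mathbf A)\mid i\leqslant1\}$, $a\preccurlyeq b$ iff $b\leqslant a$, $c\in a\circ b$ iff $c\leqslant a\cdot b$, $a^\sim={\sim}\kappa(a)$, $a^-=-\kappa(a)$, $a^\neg=\neg\kappa(a)$. For such a structure $\mathbb W=(W,I,\preccurlyeq,\circ,{}^\sim,{}^-,{}^\neg)$, $\mathbb W^+=(\mathsf{Up}(W,\preccurlyeq),\cap,\cup,\circ,I,\sim,-,\neg)$ where $\mathsf{Up}$ is the set of upsets, $U\circ V=\bigcup\{x\circ y\mid x\in U,y\in V\}$,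 ${\sim}U=\{w\mid w^-\notin U\}$, $-U=\{w\mid w^\sim\notin U\}$, $\neg U=\{w\mid w^\neg\notin U\}$. *)

(* Defs.v *)
From Stdlib Require Import ClassicalEpsilon.

Record DqRA (A : Type) := {
  meet : A -> A -> A;
  join : A -> A -> A;
  mul  : A -> A -> A;
  one  : A;
  tl   : A -> A;
  mi   : A -> A;
  ng   : A -> A;
  meetA : forall a b c, meet a (meet b c) = meet (meet a b) c;
  joinA : forall a b c, join a (join b c) = join (join a b) c;
  meetC : forall a b, meet a b = meet b a;
  joinC : forall a b, join a b = join b a;
  meet_joinK : forall a b, meet a (join a b) = a;
  join_meetK : forall a b, join a (meet a b) = a;
  meet_joinDr : forall a b c, meet a (join b c) = join (meet a b) (meet a c);
  mulA : forall a b c, mul a (mul b c) = mul (mul a b) c;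
  mul1l : forall a, mul one a = a;
  mul1r : forall a, mul a one = a;
  resid_l : forall a b c, meet (mul a b) c = mul a b <-> meet a (mi (mul b (tl c))) = a;
  resid_r : forall a b c, meet (mul a b) c = mul a b <-> meet b (tl (mul (mi c) a)) = b;
  ngK : forall a, ng (ng a) = a;
  ng_meet : forall a b, ng (meet a b) = join (ng a) (ng b);
  ng_mul : forall a b, ng (mul a b) = mi (mul (tl (ng b)) (tl (ng a)))
}.

Arguments meet {A} d _ _.  Arguments join {A} d _ _.  Arguments mul {A} d _ _.
Arguments one {A} d.  Arguments tl {A} d _.  Arguments mi {A} d _.  Arguments ng {A} d _.

Section DqRADefs.
Context {A : Type} (D : DqRA A).

Definition le (a b : A) : Prop := meet D a b = a.

Definition add (a b : A) : A := mi D (mul D (tl D b) (tl D a)).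

Definition is_lub (S : A -> Prop) (x : A) : Prop :=
  (forall s, S s -> le s x) /\ (forall y, (forall s, S s -> le s y) -> le x y).
Definition is_glb (S : A -> Prop) (x : A) : Prop :=
  (forall s, S s -> le x s) /\ (forall y, (forall s, S s -> le y s) -> le y x).

Definition complete : Prop :=
  forall S : A -> Prop, (exists x, is_lub S x) /\ (exists x, is_glb S x).

Definition Jinf (j : A) : Prop := forall S : A -> Prop, is_lub S j -> S j.
Definition Minf (m : A) : Prop := forall S : A -> Prop, is_glb S m -> S m.

Definition perfect : Prop :=
  forall a : A, is_lub (fun j => Jinf j /\ le j a) a /\
                is_glb (fun m => Minf m /\ le a m) a.

Definition complete_perfect : Prop := complete /\ perfect.

(* kappa(j) = \/ { a | ~ j <= a } (well defined when A is complete) *)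
Definition kappa (j : A) : A :=
  epsilon (inhabits (one D)) (fun k => is_lub (fun a => ~ le j a) k).

(* The frame A_+ on W = J^inf(A): x ≼ y iff y <= x *)
Definition prec (x y : A) : Prop := le y x.
Definition I1 (i : A) : Prop := Jinf i /\ le i (one D).
Definition circ (a b c : A) : Prop := Jinf c /\ le c (mul D a b).
Definition wtl (a : A) : A := tl D (kappa a).
Definition wmi (a : A) : A := mi D (kappa a).
Definition wng (a : A) : A := ng D (kappa a).

(* The complex algebra (A_+)^+ on upsets of (J^inf(A), ≼) *)
Definition upset (U : A -> Prop) : Prop :=
  (forall x, U x -> Jinf x) /\
  (forall x y, U x -> Jinf y -> prec x y -> U y).

Definition Ucap (U V : A -> Prop) : A -> Prop := fun w => U w /\ V w.
Definition Ucup (U V : A -> Prop) : A -> Prop := fun w => U w \/ V w.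
Definition Ucirc (U V : A -> Prop) : A -> Prop :=
  fun c => exists x y, U x /\ V y /\ circ x y c.
Definition Utl (U : A -> Prop) : A -> Prop := fun w => Jinf w /\ ~ U (wmi w).
Definition Umi (U : A -> Prop) : A -> Prop := fun w => Jinf w /\ ~ U (wtl w).
Definition Ung (U : A -> Prop) : A -> Prop := fun w => Jinf w /\ ~ U (wng w).

Definition psi (a : A) : A -> Prop := fun j => Jinf j /\ le j a.

Definition seteq (U V : A -> Prop) : Prop := forall x, U x <-> V x.

End DqRADefs.

(* Main.v *)
Require Import Defs.
From Stdlib Require Import Classical ClassicalEpsilon.

Lemma meet_idem {A} {D : DqRA A} a : meet D a a = a.
Proof. transitivity (meet D a (join D a (meet D a a))).
  rewrite join_meetK; reflexivity. apply meet_joinK. Qed.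

Lemma le_refl {A} {D : DqRA A} a : le D a a.
Proof. apply (meet_idem (D:=D)). Qed.

Lemma le_join {A} {D : DqRA A} a b : le D a b <-> join D a b = b.
Proof. unfold le; split; intro H.
  - rewrite <- H. rewrite joinC, meetC. apply join_meetK.
  - rewrite <- H. apply meet_joinK. Qed.

Lemma le_trans {A} {D : DqRA A} a b c : le D a b -> le D b c -> le D a c.
Proof. unfold le; intros Hab Hbc. rewrite <- Hab. rewrite <- meetA, Hbc. reflexivity. Qed.

Lemma le_antisym {A} {D : DqRA A} a b : le D a b -> le D b a -> a = b.
Proof. unfold le; intros H1 H2. rewrite <- H1. rewrite meetC. exact H2. Qed.

Lemma meet_lb1 {A} {D : DqRA A} a b : le D (meet D a b) a.
Proof. unfold le. rewrite meetC, meetA, meet_idem. reflexivity. Qed.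

Lemma meet_lb2 {A} {D : DqRA A} a b : le D (meet D a b) b.
Proof. unfold le. rewrite <- meetA, meet_idem. reflexivity. Qed.

Lemma meet_glb {A} {D : DqRA A} x a b : le D x a -> le D x b -> le D x (meet D a b).
Proof. unfold le; intros Ha Hb. rewrite meetA, Ha, Hb. reflexivity. Qed.

Lemma join_ub1 {A} {D : DqRA A} a b : le D a (join D a b).
Proof. apply meet_joinK. Qed.

Lemma join_ub2 {A} {D : DqRA A} a b : le D b (join D a b).
Proof. rewrite joinC. apply (join_ub1 (D:=D)). Qed.

Lemma join_lub {A} {D : DqRA A} a b c : le D a c -> le D b c -> le D (join D a b) c.
Proof. intros Ha Hb. apply le_join. apply le_join in Ha. apply le_join in Hb.
  rewrite <- joinA, Hb, Ha. reflexivity. Qed.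

Lemma lub_unique {A} {D : DqRA A} S x y : is_lub D S x -> is_lub D S y -> x = y.
Proof. intros [H1 H2] [H3 H4]. apply (le_antisym (D:=D)); [apply H2 | apply H4]; assumption. Qed.

Lemma lub_ext {A} {D : DqRA A} S T x : (forall z, S z <-> T z) -> is_lub D S x -> is_lub D T x.
Proof. intros E [H1 H2]. split.
  - intros s Hs. apply H1, E, Hs.
  - intros y Hy. apply H2. intros s Hs. apply Hy, E, Hs. Qed.

Lemma key {A} {D : DqRA A} : complete D -> perfect D -> forall j, Jinf D j ->
  exists m, Minf D m /\ ~ le D j m /\ forall a, ~ le D j a -> le D a m.
Proof.
  intros HC HP j Hj.
  destruct (proj1 (HC (fun x => le D x j /\ x <> j))) as [js Hjs].
  assert (Hjsj : le D js j). { apply (proj2 Hjs). intros s [H _]; exact H. }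
  assert (Hnj : ~ le D j js).
  { intro H. assert (E : js = j) by (apply (le_antisym (D:=D)); auto). subst js.
    destruct (Hj _ Hjs) as [_ HH]. apply HH; reflexivity. }
  assert (Hlt : forall x, le D x j -> x <> j -> le D x js).
  { intros x H1 H2. apply (proj1 Hjs). auto. }
  destruct (proj2 (HP js)) as [Hg1 Hg2].
  destruct (classic (exists m, (Minf D m /\ le D js m) /\ ~ le D j m)) as [[m [[Hm Hjsm] Hjm]] | Hn].
  2:{ exfalso. apply Hnj. apply Hg2. intros s Hs. apply NNPP. intro Hs'. apply Hn. eauto. }
  exists m. split; [exact Hm|]. split; [exact Hjm|].
  assert (Hjm_meet : le D (meet D j m) js).
  { apply Hlt. apply (meet_lb1 (D:=D)). intro E; apply Hjm; rewrite <- E; apply (meet_lb2 (D:=D)). }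
  destruct (proj2 (HC (fun y => le D m y /\ y <> m))) as [ms Hms].
  assert (Hmms : le D m ms). { apply (proj2 Hms). intros s [H _]; exact H. }
  assert (Hmsne : ms <> m).
  { intro E. subst ms. destruct (Hm _ Hms) as [_ HH]. apply HH; reflexivity. }
  assert (Hms_lb : forall y, le D m y -> y <> m -> le D ms y).
  { intros y H1 H2. apply (proj1 Hms). auto. }
  assert (Hjms : le D j ms).
  { destruct (classic (le D j ms)) as [H|Hn]; [exact H|]. exfalso.
    assert (Hle : le D ms (join D j m)).
    { apply Hms_lb. apply (join_ub2 (D:=D)). intro E; apply Hjm; rewrite <- E; apply (join_ub1 (D:=D)). }
    assert (Hmj : le D (meet D ms j) js).
    { apply Hlt. apply (meet_lb2 (D:=D)). intro E; apply Hn; rewrite <- E; apply (meet_lb1 (D:=D)). }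
    apply Hmsne. transitivity (meet D ms (join D j m)). symmetry; exact Hle.
    rewrite meet_joinDr. rewrite (meetC _ D ms m), Hmms.
    apply le_join. eapply (le_trans (D:=D)); eauto. }
  intros a Ha. destruct (classic (le D a m)) as [H|Hn]; [exact H|]. exfalso.
  assert (Hle : le D ms (join D a m)).
  { apply Hms_lb. apply (join_ub2 (D:=D)). intro E; apply Hn; rewrite <- E; apply (join_ub1 (D:=D)). }
  apply Hnj. apply (le_trans (D:=D)) with (meet D j (join D a m)).
  { apply (meet_glb (D:=D)); [apply (le_refl (D:=D)) | eapply (le_trans (D:=D)); eauto]. }
  rewrite meet_joinDr. apply (join_lub (D:=D)); [|exact Hjm_meet].
  apply Hlt. apply (meet_lb1 (D:=D)). intro E; apply Ha; rewrite <- E; apply (meet_lb2 (D:=D)).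
Qed.

Lemma prime {A} {D : DqRA A} : complete D -> perfect D -> forall j S x,
  Jinf D j -> is_lub D S x -> le D j x -> exists s, S s /\ le D j s.
Proof.
  intros HC HP j S x Hj Hx Hjx.
  destruct (key HC HP j Hj) as [m [_ [Hjm Hall]]].
  destruct (classic (exists s, S s /\ le D j s)) as [H|Hn]; [exact H|]. exfalso.
  apply Hjm. apply (le_trans (D:=D)) with x; auto. apply (proj2 Hx). intros s Hs.
  apply Hall. intro Hjs. apply Hn. eauto.
Qed.

Lemma kappa_prop {A} {D : DqRA A} : complete D -> perfect D -> forall j, Jinf D j ->
  Minf D (kappa D j) /\ forall a, (~ le D j a <-> le D a (kappa D j)).
Proof.
  intros HC HP j Hj.
  destruct (key HC HP j Hj) as [m [Hm [Hjm Hall]]].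
  assert (Hk : is_lub D (fun a => ~ le D j a) (kappa D j)).
  { exact (epsilon_spec (inhabits (one D)) (fun k => is_lub D (fun a => ~ le D j a) k) (proj1 (HC _))). }
  assert (E : kappa D j = m).
  { apply (le_antisym (D:=D)). apply (proj2 Hk). exact Hall. apply (proj1 Hk). exact Hjm. }
  rewrite E. split; [exact Hm|]. intro a; split; [apply Hall|].
  intros Ham Hja. apply Hjm. eapply (le_trans (D:=D)); eauto.
Qed.


Lemma anti_Jinf {A} {D : DqRA A} (f g : A -> A)
  (Hf : forall x y, le D x y -> le D (f y) (f x))
  (Hg : forall x y, le D x y -> le D (g y) (g x))
  (Hfg : forall x, f (g x) = x) (Hgf : forall x, g (f x) = x) m :
  Minf D m -> Jinf D (f m).
Proof.
  intros Hm S HS.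
  assert (H : is_glb D (fun x => exists s, S s /\ x = g s) m).
  { split.
    - intros x [s [Hs ->]]. rewrite <- (Hgf m). apply Hg. apply (proj1 HS); auto.
    - intros y Hy. assert (H : le D (f m) (f y)).
      { apply (proj2 HS). intros s Hs. rewrite <- (Hfg s). apply Hf. apply Hy. eauto. }
      apply Hg in H. rewrite !Hgf in H. exact H. }
  destruct (Hm _ H) as [s [Hs E]]. rewrite E, Hfg. exact Hs.
Qed.

Lemma neg_case {A} {D : DqRA A} : complete D -> perfect D -> forall (f g : A -> A)
  (Hf : forall x y, le D x y -> le D (f y) (f x))
  (Hg : forall x y, le D x y -> le D (g y) (g x))
  (Hfg : forall x, f (g x) = x) (Hgf : forall x, g (f x) = x) a j,
  (Jinf D j /\ le D j (g a)) <->
  (Jinf D j /\ ~ (Jinf D (f (kappa D j)) /\ le D (f (kappa D j)) a)).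
Proof.
  intros HC HP f g Hf Hg Hfg Hgf a j.
  assert (L1 : forall x b, le D (f x) b -> le D (g b) x).
  { intros x b H. apply Hg in H. rewrite Hgf in H. exact H. }
  assert (L2 : forall x b, le D (g b) x -> le D (f x) b).
  { intros x b H. apply Hf in H. rewrite Hfg in H. exact H. }
  split.
  - intros [Hj H]. split; [exact Hj|]. intros [_ H2].
    destruct (kappa_prop HC HP j Hj) as [_ KP].
    apply L1 in H2. apply KP in H2. contradiction.
  - intros [Hj H]. split; [exact Hj|].
    destruct (kappa_prop HC HP j Hj) as [Hk KP].
    apply NNPP. intro Hn. apply H. split.
    + apply (anti_Jinf (D:=D) f g); auto.
    + apply L2. apply KP. exact Hn.
Qed.

Lemma mul_mono_l {A} {D : DqRA A} a a' b : le D a a' -> le D (mul D a b) (mul D a' b).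
Proof.
  intro H. apply (proj2 (resid_l _ D a b (mul D a' b))).
  change (le D a (mi D (mul D b (tl D (mul D a' b))))).
  apply (le_trans (D:=D)) with a'; auto.
  apply (proj1 (resid_l _ D a' b _)). apply (meet_idem (D:=D)).
Qed.

Lemma mul_mono_r {A} {D : DqRA A} a b b' : le D b b' -> le D (mul D a b) (mul D a b').
Proof.
  intro H. apply (proj2 (resid_r _ D a b (mul D a b'))).
  change (le D b (tl D (mul D (mi D (mul D a b')) a))).
  apply (le_trans (D:=D)) with b'; auto.
  apply (proj1 (resid_r _ D a b' _)). apply (meet_idem (D:=D)).
Qed.

Lemma mul_lub_l {A} {D : DqRA A} S s b : is_lub D S s ->
  is_lub D (fun z => exists x, S x /\ z = mul D x b) (mul D s b).
Proof.
  intros H. split.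
  - intros z [x [Hx ->]]. apply (mul_mono_l (D:=D)). apply (proj1 H). auto.
  - intros y Hy. apply (proj2 (resid_l _ D s b y)). apply (proj2 H).
    intros x Hx. apply (proj1 (resid_l _ D x b y)). apply Hy. eauto.
Qed.

Lemma mul_lub_r {A} {D : DqRA A} S s a : is_lub D S s ->
  is_lub D (fun z => exists x, S x /\ z = mul D a x) (mul D a s).
Proof.
  intros H. split.
  - intros z [x [Hx ->]]. apply (mul_mono_r (D:=D)). apply (proj1 H). auto.
  - intros y Hy. apply (proj2 (resid_r _ D a s y)). apply (proj2 H).
    intros x Hx. apply (proj1 (resid_r _ D a x y)). apply Hy. eauto.
Qed.

Lemma tl_mi {A} {D : DqRA A} c : tl D (mi D c) = c.
Proof.
  pose proof (resid_r _ D (one D) c c) as H1.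
  pose proof (resid_r _ D (one D) (tl D (mi D c)) c) as H2.
  rewrite !mul1l, !mul1r in H1, H2.
  apply (le_antisym (D:=D)).
  - apply (proj2 H2). apply (meet_idem (D:=D)).
  - apply (proj1 H1). apply (meet_idem (D:=D)).
Qed.

Lemma mi_tl {A} {D : DqRA A} c : mi D (tl D c) = c.
Proof.
  pose proof (resid_l _ D c (one D) c) as H1.
  pose proof (resid_l _ D (mi D (tl D c)) (one D) c) as H2.
  rewrite !mul1l, !mul1r in H1, H2.
  apply (le_antisym (D:=D)).
  - apply (proj2 H2). apply (meet_idem (D:=D)).
  - apply (proj1 H1). apply (meet_idem (D:=D)).
Qed.

Lemma mi_anti {A} {D : DqRA A} x y : le D x y -> le D (mi D y) (mi D x).
Proof.
  intro Hxy.
  assert (K : forall z w, le D (mul D z w) (mi D (one D)) <-> le D z (mi D w)).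
  { intros z w. pose proof (resid_l _ D z w (mi D (one D))) as R.
    rewrite tl_mi, mul1r in R. exact R. }
  apply K. apply (le_trans (D:=D)) with (mul D (mi D y) y). apply (mul_mono_r (D:=D)); auto.
  apply K. apply (le_refl (D:=D)).
Qed.

Lemma tl_anti {A} {D : DqRA A} x y : le D x y -> le D (tl D y) (tl D x).
Proof.
  intro Hxy.
  assert (K : forall z w, le D (mul D z w) (tl D (one D)) <-> le D w (tl D z)).
  { intros z w. pose proof (resid_r _ D z w (tl D (one D))) as R.
    rewrite mi_tl, mul1l in R. exact R. }
  apply K. apply (le_trans (D:=D)) with (mul D y (tl D y)). apply (mul_mono_l (D:=D)); auto.
  apply K. apply (le_refl (D:=D)).
Qed.

Lemma ng_anti {A} {D : DqRA A} x y : le D x y -> le D (ng D y) (ng D x).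
Proof.
  intro H. apply le_join. rewrite joinC, <- ng_meet. unfold le in H. rewrite H. reflexivity.
Qed.

Theorem mainTheorem11 (A : Type) (D : DqRA A) :
  complete_perfect D ->
  (* psi is a bijection from A onto Up(J^inf(A), ≼) *)
  (forall a, upset D (psi D a)) /\
  (forall a b, seteq (psi D a) (psi D b) -> a = b) /\
  (forall U, upset D U -> exists a, seteq (psi D a) U) /\
  (* and a DqRA homomorphism A -> (A_+)^+ *)
  (forall a b, seteq (psi D (meet D a b)) (Ucap (psi D a) (psi D b))) /\
  (forall a b, seteq (psi D (join D a b)) (Ucup (psi D a) (psi D b))) /\
  (forall a b, seteq (psi D (mul D a b)) (Ucirc D (psi D a) (psi D b))) /\
  seteq (psi D (one D)) (I1 D) /\
  (forall a, seteq (psi D (tl D a)) (Utl D (psi D a))) /\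
  (forall a, seteq (psi D (mi D a)) (Umi D (psi D a))) /\
  (forall a, seteq (psi D (ng D a)) (Ung D (psi D a))).
Proof.
  intros [HC HP].
  split.
  { intros a. split. intros x [Hx _]; exact Hx.
    intros x y [Hx Hxa] Hy Hxy. split; auto. unfold prec in Hxy. eapply (le_trans (D:=D)); eauto. }
  split.
  { intros a b H. apply (lub_unique (D:=D)) with (S := psi D a).
    exact (proj1 (HP a)). apply (lub_ext (D:=D)) with (S := psi D b).
    intro z; split; apply H. exact (proj1 (HP b)). }
  split.
  { intros U [HU1 HU2]. destruct (proj1 (HC U)) as [x Hx]. exists x. intros j. split.
    - intros [Hj Hjx]. destruct (prime HC HP j U x Hj Hx Hjx) as [s [Hs Hjs]].
      eapply HU2; eauto.
    - intros Hj. split. apply HU1; auto. apply (proj1 Hx); auto. }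
  split.
  { intros a b j. unfold psi, Ucap. split.
    - intros [Hj H]. split; split; auto; eapply (le_trans (D:=D)); eauto; [apply (meet_lb1 (D:=D)) | apply (meet_lb2 (D:=D))].
    - intros [[Hj Ha] [_ Hb]]. split; auto. apply (meet_glb (D:=D)); auto. }
  split.
  { intros a b j. unfold psi, Ucup. split.
    - intros [Hj H].
      assert (Hl : is_lub D (fun x => x = a \/ x = b) (join D a b)).
      { split. intros s [-> | ->]; [apply (join_ub1 (D:=D)) | apply (join_ub2 (D:=D))].
        intros y Hy. apply (join_lub (D:=D)); apply Hy; auto. }
      destruct (prime HC HP j _ _ Hj Hl H) as [s [[-> | ->] Hs]]; [left|right]; auto.
    - intros [[Hj H]|[Hj H]]; split; auto; eapply (le_trans (D:=D)); eauto;
        [apply (join_ub1 (D:=D)) | apply (join_ub2 (D:=D))]. }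
  split.
  { intros a b j. unfold psi, Ucirc, circ. split.
    - intros [Hj H].
      destruct (prime HC HP j _ _ Hj (mul_lub_l _ _ b (proj1 (HP a))) H)
        as [z [[x [Hx ->]] Hjx]].
      destruct (prime HC HP j _ _ Hj (mul_lub_r _ _ x (proj1 (HP b))) Hjx)
        as [z [[y [Hy ->]] Hjy]].
      exists x, y. auto.
    - intros [x [y [[Hx Hxa] [[Hy Hyb] [Hj H]]]]]. split; auto.
      eapply (le_trans (D:=D)); [exact H|]. eapply (le_trans (D:=D)).
      apply (mul_mono_l (D:=D)); eauto. apply (mul_mono_r (D:=D)); eauto. }
  split.
  { intro j; unfold psi, I1; tauto. }
  split.
  { intros a j. unfold psi, Utl, wmi.
    apply (neg_case HC HP (mi D) (tl D)).
    apply mi_anti. apply tl_anti. apply mi_tl. apply tl_mi. }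
  split.
  { intros a j. unfold psi, Umi, wtl.
    apply (neg_case HC HP (tl D) (mi D)).
    apply tl_anti. apply mi_anti. apply tl_mi. apply mi_tl. }
  { intros a j. unfold psi, Ung, wng.
    apply (neg_case HC HP (ng D) (ng D)).
    apply ng_anti. apply ng_anti. apply ngK. apply ngK. }
Qed.
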